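(* Let $n=n(\theta)$ be positive integers with $n\to\infty$ and $\theta/n\to0$ as $\theta\to\infty$. Let $K_n(\theta)$ be a random variable with $P\{K_n(\theta)=k\}=|S_n^k|\theta^k/\theta_{(n)}$, $k=1,\dots,n$, where $\theta_{(n)}=\theta(\theta+1)\cdots(\theta+n-1)$ and $|S_n^k|$ is the coefficient of $\theta^k$ in $\theta_{(n)}$. Then, as $\theta\to\infty$, the family of laws of $K_n(\theta)/(\theta\log\frac n\theta)$ satisfies an LDP on $[0,+\infty)$ with speed $\theta\log\frac n\theta$ and rate function $I(x)=x\log x-x+1$ (with $0\log0=0$).
   Context: $K_n(\theta)$ is the number of distinct alleles in a sample of size $n$ from a $PD(\theta)$ population. An LDP with speed $a(\theta)$ uses normalization $a(\theta)^{-1}\log$ as $\theta\to\infty$. *)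

(* Defs.v *)
From HB Require Import structures.
From mathcomp Require Import all_boot all_order all_algebra.
From mathcomp Require Import all_classical all_reals all_analysis.
Set Implicit Arguments. Unset Strict Implicit. Unset Printing Implicit Defensive.
Import Order.TTheory GRing.Theory Num.Theory.
Import numFieldNormedType.Exports.
Local Open Scope classical_set_scope.
Local Open Scope ring_scope.

Definition rising_poly (R : realType) (n : nat) : {poly R} :=
  \prod_(i < n) ('X + (i%:R)%:P).

Definition rising (R : realType) (theta : R) (n : nat) : R :=
  \prod_(i < n) (theta + i%:R).

Definition stirling1 (R : realType) (n k : nat) : R := (rising_poly R n)`_k.

Definition probK (R : realType) (theta : R) (n k : nat) : R :=
  stirling1 R n k * theta ^+ k / rising theta n.

Definition law_scaledK (R : realType) (theta s : R) (n : nat) (A : set R) : R :=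
  \sum_(1 <= k < n.+1) probK theta n k * \1_A (k%:R / s).

Definition rateI (R : realType) (x : R) : R :=
  (if x == 0 then 0 else x * ln x) - x + 1.

(* Large deviation principle on the state space [0, +oo) (a closed subset of R)
   for a family of laws mu t (probability measures given as set functions),
   t -> +oo, with speed a t and rate function I defined on [0,+oo).
   Closed (resp. open) subsets of [0,+oo) are exactly F `&` [0,+oo) with F
   closed (resp. open) in R; since the laws are supported in [0,+oo),
   mu t (F `&` [0,+oo)) = mu t F.  The usual bounds
     limsup_t (1/a t) log mu t F <= - inf_{F `&` [0,oo)} I,
     liminf_t (1/a t) log mu t G >= - inf_{G `&` [0,oo)} I
   are written in their elementary epsilon form (which also handles
   log 0 = -oo and inf over the empty set = +oo).  We also require I to be a
   rate function: nonnegative with closed sublevel sets. *)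
Definition LDP_on_nonneg (R : realType) (mu : R -> set R -> R) (a : R -> R)
    (I : R -> R) : Prop :=
  [/\ (forall x : R, 0 <= x -> 0 <= I x),
      (forall c : R, closed [set x : R | 0 <= x /\ I x <= c]),
      (forall (F : set R), closed F ->
         forall M : R, (forall x, F x -> 0 <= x -> M <= I x) ->
         forall eps : R, 0 < eps ->
         \forall t \near +oo%R, mu t F <= expR (a t * (eps - M))) &
      (forall (G : set R), open G ->
         forall x : R, G x -> 0 <= x ->
         forall eps : R, 0 < eps ->
         \forall t \near +oo%R, expR (- (a t * (I x + eps))) <= mu t G)].

(* Main.v *)
Require Import Defs.
From HB Require Import structures.
From mathcomp Require Import all_boot all_order all_algebra.
From mathcomp Require Import all_classical all_reals all_analysis.
From mathcomp Require Import ring lra.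
Import Order.TTheory GRing.Theory Num.Theory.
Import numFieldNormedType.Exports.
Local Open Scope classical_set_scope.
Local Open Scope ring_scope.


Section Alg.
Variable R : realType.

Lemma rising_polyS n : rising_poly R n.+1 = rising_poly R n * ('X + (n%:R)%:P).
Proof. by rewrite /rising_poly big_ord_recr. Qed.


Lemma size_rising_poly n : (size (rising_poly R n) <= n.+1)%N.
Proof.
elim: n => [|n IH]; first by rewrite /rising_poly big_ord0 size_poly1.
rewrite rising_polyS; apply: leq_trans (size_mul_leq _ _) _.
by rewrite size_XaddC addn2 /=.
Qed.

Lemma horner_rising n (y : R) : (rising_poly R n).[y] = rising y n.
Proof.
rewrite /rising_poly horner_prod; apply: eq_bigr => i _.
by rewrite hornerD hornerX hornerC.
Qed.

Lemma stirling1_0 n : (0 < n)%N -> stirling1 R n 0 = 0.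
Proof.
case: n => // n _; rewrite /stirling1; elim: n => [|n IH].
  by rewrite rising_polyS /rising_poly big_ord0 mul1r coefD coefX coefC /= add0r.
by rewrite rising_polyS coef0M IH mul0r.
Qed.

Lemma stirling1_ge0 n k : 0 <= stirling1 R n k.
Proof.
rewrite /stirling1; elim: n k => [|n IH] k.
  by rewrite /rising_poly big_ord0 coef1; case: (k == 0%N).
rewrite rising_polyS mulrDr coefD coefMX coefMC.
apply: addr_ge0; last by apply: mulr_ge0.
by case: (k == 0%N).
Qed.

Lemma gen_sum n (y : R) : (0 < n)%N ->
  \sum_(1 <= k < n.+1) stirling1 R n k * y ^+ k = rising y n.
Proof.
move=> n0; rewrite -horner_rising (horner_coef_wide _ (size_rising_poly n)).
rewrite big_ord_recl /= -/(stirling1 R n 0) stirling1_0 // mul0r add0r.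
rewrite big_add1 /= big_mkord. apply: eq_bigr => i _. done.
Qed.

End Alg.
Arguments rising_polyS {R}. Arguments size_rising_poly {R}. Arguments horner_rising {R}.
Arguments stirling1_0 {R}. Arguments stirling1_ge0 {R}. Arguments gen_sum {R}.


Section An.
Variable R : realType.

Lemma risingS (c : R) n : rising c n.+1 = rising c n * (c + n%:R).
Proof. by rewrite /rising big_ord_recr. Qed.

Lemma rising_gt0 (c : R) n : 0 < c -> 0 < rising c n.
Proof.
move=> c0; rewrite /rising; apply: prodr_gt0 => i _.
by apply: ltr_wpDr.
Qed.

Definition Hs (c : R) n := \sum_(i < n) (c + i%:R)^-1.

Lemma HsS (c : R) n : Hs c n.+1 = Hs c n + (c + n%:R)^-1.
Proof. by rewrite /Hs big_ord_recr. Qed.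

Lemma ratio_ub (t z : R) n : 0 < t -> 0 < z ->
  rising (t * z) n <= rising t n * expR (t * (z - 1) * Hs t n).
Proof.
move=> t0 z0; elim: n => [|n IH].
  by rewrite /rising /Hs !big_ord0 mulr0 expR0 mulr1.
have tn : 0 < t + n%:R by apply: ltr_wpDr.
rewrite !risingS HsS [t * (z - 1) * _]mulrDr expRD.
have key : t * z + n%:R <= (t + n%:R) * expR (t * (z - 1) * (t + n%:R)^-1).
  have := expR_ge1Dx (t * (z - 1) * (t + n%:R)^-1).
  move=> h; apply: le_trans (ler_wpM2l (ltW tn) h).
  rewrite mulrDr mulr1 mulrCA mulfV ?gt_eqF // mulr1; lra.
have r0 := ltW (rising_gt0 t n t0).
apply: le_trans (ler_wpM2r _ IH) _.
  by apply: addr_ge0; [apply: mulr_ge0; apply: ltW|].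
have -> : rising t n * (t + n%:R) *
  (expR (t * (z - 1) * Hs t n) * expR (t * (z - 1) * (t + n%:R)^-1)) =
  (rising t n * expR (t * (z - 1) * Hs t n)) * ((t + n%:R) * expR (t * (z - 1) * (t + n%:R)^-1)) by ring.
apply: ler_wpM2l => //.
by apply: mulr_ge0 => //; apply: ltW (expR_gt0 _).
Qed.

Lemma ratio_lb (t z : R) n : 0 < t -> 0 < z ->
  rising t n * expR (t * (z - 1) * Hs (t * z) n) <= rising (t * z) n.
Proof.
move=> t0 z0; elim: n => [|n IH].
  by rewrite /rising /Hs !big_ord0 mulr0 expR0 mulr1.
have tn : 0 < t + n%:R by apply: ltr_wpDr.
have tzn : 0 < t * z + n%:R by apply: ltr_wpDr => //; apply: mulr_gt0.
rewrite !risingS HsS [t * (z - 1) * _]mulrDr expRD.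
have key : (t + n%:R) * expR (t * (z - 1) * (t * z + n%:R)^-1) <= t * z + n%:R.
  set v := t * (z - 1) * (t * z + n%:R)^-1.
  have h := expR_ge1Dx (- v).
  have e1 : 1 + - v = (t + n%:R) / (t * z + n%:R).
    rewrite /v; field; lra.
  rewrite e1 in h.
  have h2 : t + n%:R <= (t * z + n%:R) * expR (- v).
    by rewrite -ler_pdivrMl // mulrC.
  have := ler_wpM2r (ltW (expR_gt0 v)) h2.
  by rewrite -mulrA -expRD addNr expR0 mulr1.
have r0 := ltW (rising_gt0 t n t0).
apply: le_trans _ (ler_wpM2r (ltW tzn) IH).
have -> : rising t n * (t + n%:R) *
  (expR (t * (z - 1) * Hs (t * z) n) * expR (t * (z - 1) * (t * z + n%:R)^-1)) =
  (rising t n * expR (t * (z - 1) * Hs (t * z) n)) * ((t + n%:R) * expR (t * (z - 1) * (t * z + n%:R)^-1)) by ring.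
apply: ler_wpM2l => //.
by apply: mulr_ge0 => //; apply: ltW (expR_gt0 _).
Qed.

Lemma Hs_lb (c : R) n : 0 < c -> 1 + n%:R / c <= expR (Hs c n).
Proof.
move=> c0; elim: n => [|n IH]; first by rewrite /Hs big_ord0 expR0 mul0r addr0.
have cn : 0 < c + n%:R by apply: ltr_wpDr.
rewrite HsS expRD.
apply: le_trans (_ : (1 + n%:R / c) * (1 + (c + n%:R)^-1) <= _).
  rewrite le_eqVlt; apply/orP; left; apply/eqP; rewrite -natr1; move: cn; set m := n%:R => cn; field.
  by rewrite !gt_eqF.
apply: ler_pM => //; last exact: expR_ge1Dx.
  by apply: addr_ge0 => //; apply: divr_ge0 => //; apply: ltW.
by apply: addr_ge0 => //; rewrite invr_ge0 ltW.
Qed.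

Lemma expR_inv_le (c : R) : 0 < c -> expR (c + 1)^-1 <= (c + 1) / c.
Proof.
move=> c0.
have c1 : 0 < c + 1 by lra.
have h := expR_ge1Dx (- (c + 1)^-1).
have e1 : 1 + - (c + 1)^-1 = c / (c + 1) by field; rewrite gt_eqF.
rewrite e1 in h.
have h2 : c <= (c + 1) * expR (- (c + 1)^-1).
  by rewrite -ler_pdivrMl // mulrC.
have := ler_wpM2r (ltW (expR_gt0 (c + 1)^-1)) h2.
rewrite -mulrA -expRD addNr expR0 mulr1 => h3.
by rewrite ler_pdivlMr // mulrC.
Qed.

Lemma Hs_ub_aux (c : R) m : 0 < c -> expR (Hs c m.+1) <= expR c^-1 * (1 + m%:R / c).
Proof.
move=> c0; elim: m => [|m IH].
  by rewrite HsS /Hs big_ord0 add0r addr0 mul0r addr0 mulr1.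
have cm : 0 < c + m%:R by apply: ltr_wpDr.
rewrite HsS expRD.
apply: le_trans (ler_wpM2r (ltW (expR_gt0 _)) IH) _.
rewrite -mulrA; apply: ler_wpM2l; first exact: ltW (expR_gt0 _).
rewrite -!natr1 addrA.
have h1 : 0 <= 1 + m%:R / c by apply: addr_ge0 => //; apply: divr_ge0 => //; apply: ltW.
have h2 := ler_wpM2l h1 (expR_inv_le _ cm). apply: le_trans h2 _.
move: cm h1; set k := m%:R => cm h1.
rewrite le_eqVlt; apply/orP; left; apply/eqP; field.
by rewrite !gt_eqF.
Qed.

Lemma Hs_ub (c : R) n : 0 < c -> expR (Hs c n) <= expR c^-1 * (1 + n%:R / c).
Proof.
move=> c0; case: n => [|m].
  rewrite /Hs big_ord0 expR0 mul0r addr0 mulr1 -expR0 ler_expR.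
  by rewrite invr_ge0 ltW.
apply: le_trans (Hs_ub_aux c m c0) _.
apply: ler_wpM2l; first exact: ltW (expR_gt0 _).
rewrite lerD2l; apply: ler_wpM2r; [by rewrite invr_ge0 ltW|]. by rewrite ler_nat.
Qed.

End An.
Arguments Hs {R}.
Arguments risingS {R}. Arguments rising_gt0 {R}. Arguments HsS {R}.
Arguments ratio_ub {R}. Arguments ratio_lb {R}. Arguments Hs_lb {R}.
Arguments expR_inv_le {R}. Arguments Hs_ub_aux {R}. Arguments Hs_ub {R}.


Section An2.
Variable R : realType.

Lemma ln_le_expR (y h : R) : 0 < y -> y <= expR h -> ln y <= h.
Proof. by move=> y0 yh; rewrite -ler_expR lnK. Qed.

Lemma Hs_ln_lb (c : R) n : 0 < c -> ln (1 + n%:R / c) <= Hs c n.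
Proof. by move=> c0; apply: ln_le_expR; [apply: ltr_pwDl => //; apply: divr_ge0 => //; apply: ltW|apply: Hs_lb]. Qed.

Lemma Hs_ln_ub (c : R) n : 0 < c -> Hs c n <= c^-1 + ln (1 + n%:R / c).
Proof.
move=> c0; have y0 : 0 < 1 + n%:R / c.
  by apply: ltr_pwDl => //; apply: divr_ge0 => //; apply: ltW.
rewrite -ler_expR expRD lnK //; exact: Hs_ub.
Qed.

Lemma Hs_L (t x : R) n : 1 <= t -> t <= n%:R -> 0 < x ->
  ln (n%:R / t) - `|ln x| <= Hs (t * x) n /\ Hs (t * x) n <= ln (n%:R / t) + 2 / x.
Proof.
move=> t1 tn x0.
have t0 : 0 < t by lra.
have n0 : 0 < n%:R :> R by lra.
have tx0 : 0 < t * x by apply: mulr_gt0.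
have nt0 : 0 < n%:R / t by apply: divr_gt0.
split.
  apply: le_trans (Hs_ln_lb _ _ tx0).
  have e : n%:R / (t * x) = (n%:R / t) / x by rewrite invfM mulrA.
  apply: (@le_trans _ _ (ln (n%:R / (t * x)))).
    have -> : ln (n%:R / (t * x)) = ln (n%:R / t) - ln x.
      by rewrite e ln_div // posrE.
    have := ler_norm (ln x); lra.
  rewrite ler_ln ?posrE; last by apply: ltr_pwDl => //; apply: ltW; apply: divr_gt0.
    by rewrite lerDr.
  by apply: divr_gt0.
apply: le_trans (Hs_ln_ub _ _ tx0) _.
have e : 1 + n%:R / (t * x) = (n%:R / t) * (t / n%:R + x^-1).
  by field; rewrite !gt_eqF.
have q0 : 0 < t / n%:R + x^-1.
  have : 0 < x^-1 by rewrite invr_gt0.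
  have : 0 < t / n%:R by apply: divr_gt0.
  lra.
rewrite e lnM ?posrE //.
have h1 : (t * x)^-1 <= x^-1.
  rewrite invfM -[X in _ <= X]mul1r; apply: ler_wpM2r; first by rewrite invr_ge0 ltW.
  by rewrite invf_le1.
have h2 : ln (t / n%:R + x^-1) <= x^-1.
  have := @le_ln1Dx R (t / n%:R + x^-1 - 1).
  rewrite addrCA subrr addr0 => h; apply: le_trans (h _) _.
    by lra.
  have : t / n%:R <= 1 by rewrite ler_pdivrMr // mul1r.
  lra.
lra.
Qed.

Lemma Hs_lin (t x a : R) n : 1 <= t -> t <= n%:R -> 0 < x ->
  a * Hs (t * x) n <= a * ln (n%:R / t) + `|a| * (`|ln x| + 2 / x).
Proof.
move=> t1 tn x0; have [h1 h2] := Hs_L t x n t1 tn x0.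
have lx := normr_ge0 (ln x).
have x2 : 0 <= 2 / x by apply: divr_ge0 => //; apply: ltW.
have [a0|a0] := leP 0 a.
  rewrite ger0_norm //.
  have := ler_wpM2l a0 h2; rewrite mulrDr => h.
  apply: le_trans h _; rewrite lerD2l ler_wpM2l //; lra.
rewrite ltr0_norm //.
have na : 0 <= - a by lra.
have h := ler_wpM2l na h1.
have h3 : 0 <= - a * (`|ln x| + 2 / x) - - a * `|ln x|.
  rewrite -mulrBr; apply: mulr_ge0; lra.
have e1 : - a * (ln (n%:R / t) - `|ln x|) = - (a * ln (n%:R / t)) + a * `|ln x| by ring.
have e3 : - a * `|ln x| = - (a * `|ln x|) by ring.
rewrite e3 in h3.
have e2 : - a * Hs (t * x) n = - (a * Hs (t * x) n) by ring.
rewrite e1 e2 in h.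
lra.
Qed.

End An2.
Arguments ln_le_expR {R}. Arguments Hs_ln_lb {R}. Arguments Hs_ln_ub {R}.
Arguments Hs_L {R}. Arguments Hs_lin {R}.


Section Ch.
Variable R : realType.

Lemma probK_ge0 (t : R) n k : 0 < t -> 0 <= probK t n k.
Proof.
move=> t0; rewrite /probK; apply: divr_ge0; last exact: ltW (rising_gt0 t n t0).
by apply: mulr_ge0; [exact: stirling1_ge0|apply: exprn_ge0; apply: ltW].
Qed.

Lemma gen_probK (t z : R) n : (0 < n)%N -> 0 < t ->
  \sum_(1 <= k < n.+1) probK t n k * z ^+ k = rising (t * z) n / rising t n.
Proof.
move=> n0 t0; rewrite -(gen_sum n (t * z) n0) mulr_suml; apply: eq_bigr => k _.
rewrite /probK exprMn; ring.
Qed.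

Lemma ind01 (A : set R) x : 0 <= (\1_A x : R) <= 1.
Proof. rewrite indicE; case: (x \in A) => /=; rewrite ?lexx ?ler01 //. Qed.

Lemma ind1 (A : set R) x : A x -> (\1_A x : R) = 1.
Proof. by move=> h; rewrite indicE mem_set. Qed.

Lemma ind0 (A : set R) x : ~ A x -> (\1_A x : R) = 0.
Proof. by move=> h; rewrite indicE memNset. Qed.

Lemma chernoff_bd (t s y tau z : R) n (A : set R) : (0 < n)%N -> 0 < t -> 0 < z ->
  (forall k : nat, (0 < k)%N -> A (k%:R / s) -> tau * (y * s) <= tau * k%:R) ->
  \sum_(1 <= k < n.+1) probK t n k * z ^+ k * \1_A (k%:R / s)
    <= expR (- (tau * (y * s))) * (rising (t * (z * expR tau)) n / rising t n).
Proof.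
move=> n0 t0 z0 hA.
rewrite -gen_probK // mulr_sumr big_nat [X in _ <= X]big_nat.
apply: ler_sum => k /andP[k1 _].
have p0 := probK_ge0 t n k t0.
have zk : 0 <= z ^+ k by apply: exprn_ge0; apply: ltW.
rewrite exprMn -expRM_natr.
have -> : expR (- (tau * (y * s))) * (probK t n k * (z ^+ k * expR (tau * k%:R)))
   = probK t n k * z ^+ k * expR (tau * k%:R - tau * (y * s)).
  by rewrite expRD; ring.
apply: ler_wpM2l; first exact: mulr_ge0.
case: (pselect (A (k%:R / s))) => h.
  rewrite ind1 //; have hh := hA k k1 h.
  have : expR 0 <= expR (tau * k%:R - tau * (y * s)) by rewrite ler_expR subr_ge0.
  by rewrite expR0.
by rewrite ind0 //; apply: ltW (expR_gt0 _).
Qed.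

Lemma law_eq (t s : R) n A :
  law_scaledK t s n A = \sum_(1 <= k < n.+1) probK t n k * 1 ^+ k * \1_A (k%:R / s).
Proof. by apply: eq_bigr => k _; rewrite expr1n mulr1. Qed.

Lemma law_le1 (t s : R) n A : (0 < n)%N -> 0 < t -> law_scaledK t s n A <= 1.
Proof.
move=> n0 t0; rewrite law_eq.
apply: le_trans (_ : \sum_(1 <= k < n.+1) probK t n k * 1 ^+ k <= _).
  rewrite !big_nat; apply: ler_sum => k _.
  have := ind01 A (k%:R / s); have := probK_ge0 t n k t0; rewrite expr1n mulr1.
  move=> p0 /andP[_ h]; rewrite -[X in _ <= X]mulr1; exact: ler_wpM2l.
rewrite gen_probK // mulr1 divff //; rewrite gt_eqF //; exact: rising_gt0.
Qed.

Lemma law_ge0 (t s : R) n A : 0 < t -> 0 <= law_scaledK t s n A.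
Proof.
move=> t0; rewrite /law_scaledK big_nat; apply: sumr_ge0 => k _.
apply: mulr_ge0; [exact: probK_ge0|by case/andP: (ind01 A (k%:R / s))].
Qed.

End Ch.
Arguments probK_ge0 {R}. Arguments gen_probK {R}. Arguments ind01 {R}.
Arguments ind1 {R}. Arguments ind0 {R}. Arguments chernoff_bd {R}.
Arguments law_eq {R}. Arguments law_le1 {R}. Arguments law_ge0 {R}.


Section Tails.
Variable R : realType.

Lemma ratio_ub' (t z : R) n : 0 < t -> 0 < z ->
  rising (t * z) n / rising t n <= expR (t * (z - 1) * Hs t n).
Proof.
move=> t0 z0; rewrite ler_pdivrMr ?(rising_gt0 t n t0) // [_ * rising _ _]mulrC; exact: ratio_ub.
Qed.

Lemma ratio_lb' (t z : R) n : 0 < t -> 0 < z ->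
  expR (t * (z - 1) * Hs (t * z) n) <= rising (t * z) n / rising t n.
Proof.
move=> t0 z0; rewrite ler_pdivlMr ?(rising_gt0 t n t0) // [expR _ * _]mulrC; exact: ratio_lb.
Qed.

Lemma lower_tail (t y : R) n (A : set R) : (0 < n)%N -> 1 <= t -> t <= n%:R ->
  0 < ln (n%:R / t) -> 0 < y < 1 -> (forall u, A u -> u <= y) ->
  law_scaledK t (t * ln (n%:R / t)) n A <= expR (- (t * ln (n%:R / t) * rateI y)).
Proof.
move=> n0 t1 tn L0 /andP[y0 y1] hA.
set L := ln (n%:R / t).
have t0 : 0 < t by lra.
have s0 : 0 < t * L by apply: mulr_gt0.
have ly : ln y < 0 by apply: ln_lt0; rewrite y0 y1.
rewrite law_eq.
apply: le_trans (chernoff_bd t (t * L) y (ln y) 1 n A n0 t0 ltr01 _) _.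

  move=> k k0 /hA h.
  have : k%:R <= y * (t * L) by rewrite -ler_pdivrMr.
  nra.
rewrite mul1r lnK ?posrE //.
apply: le_trans (ler_wpM2l (ltW (expR_gt0 _)) (ratio_ub' t y n t0 y0)) _.
rewrite -expRD ler_expR /rateI gt_eqF //=.
have [h1 _] := Hs_L t 1 n t1 tn ltr01.
rewrite mulr1 ln1 normr0 subr0 in h1.
rewrite -/L in h1.
have : t * (y - 1) * (Hs t n - L) <= 0.
  apply: mulr_le0_ge0; last lra.
  apply: mulr_ge0_le0; lra.
move=> h2.
have e : - (ln y * (y * (t * L))) + t * (y - 1) * Hs t n =
  - (t * L * (y * ln y - y + 1)) + t * (y - 1) * (Hs t n - L) by ring.
rewrite e; lra.
Qed.

Lemma upper_tail (t y : R) n (A : set R) : (0 < n)%N -> 1 <= t -> t <= n%:R ->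
  0 < ln (n%:R / t) -> 1 < y -> (forall u, A u -> y <= u) ->
  law_scaledK t (t * ln (n%:R / t)) n A
    <= expR (- (t * ln (n%:R / t) * rateI y) + 2 * t * (y - 1)).
Proof.
move=> n0 t1 tn L0 y1 hA.
set L := ln (n%:R / t).
have t0 : 0 < t by lra.
have y0 : 0 < y by lra.
have s0 : 0 < t * L by apply: mulr_gt0.
have ly : 0 < ln y by apply: ln_gt0.
rewrite law_eq.
apply: le_trans (chernoff_bd t (t * L) y (ln y) 1 n A n0 t0 ltr01 _) _.
  move=> k k0 /hA h.
  have : y * (t * L) <= k%:R by rewrite -ler_pdivlMr.
  nra.
rewrite mul1r lnK ?posrE //.
apply: le_trans (ler_wpM2l (ltW (expR_gt0 _)) (ratio_ub' t y n t0 y0)) _.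
rewrite -expRD ler_expR /rateI gt_eqF //=.
have [_ h1] := Hs_L t 1 n t1 tn ltr01.
rewrite mulr1 divr1 -/L in h1.
have : t * (y - 1) * (Hs t n - L - 2) <= 0.
  apply: mulr_ge0_le0; last lra.
  apply: mulr_ge0; lra.
move=> h2.
have e : - (ln y * (y * (t * L))) + t * (y - 1) * Hs t n =
  - (t * L * (y * ln y - y + 1)) + 2 * t * (y - 1) + t * (y - 1) * (Hs t n - L - 2) by ring.
rewrite e; lra.
Qed.

End Tails.
Arguments ratio_ub' {R}. Arguments ratio_lb' {R}.
Arguments lower_tail {R}. Arguments upper_tail {R}.


Section Win.
Variable R : realType.

Definition Sw (t s x : R) n (A : set R) :=
  \sum_(1 <= k < n.+1) probK t n k * x ^+ k * \1_A (k%:R / s).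

Lemma decomp (t s x : R) n (W U D : set R) : (0 < n)%N -> 0 < t -> 0 < x ->
  (forall u, W u \/ U u \/ D u) ->
  rising (t * x) n / rising t n <= Sw t s x n W + Sw t s x n U + Sw t s x n D.
Proof.
move=> n0 t0 x0 hc.
rewrite -gen_probK // /Sw -!big_split /= !big_nat; apply: ler_sum => k _.
have p0 := probK_ge0 t n k t0.
have xk : 0 <= x ^+ k by apply: exprn_ge0; apply: ltW.
rewrite -!mulrDr -[X in X <= _]mulr1; apply: ler_wpM2l; first exact: mulr_ge0.
have := ind01 W (k%:R / s); have := ind01 U (k%:R / s); have := ind01 D (k%:R / s).
move=> /andP[d0 _] /andP[u0 _] /andP[w0 _].
case: (hc (k%:R / s)) => [h|[h|h]]; [rewrite (ind1 W)|rewrite (ind1 U)|rewrite (ind1 D)] => //; lra.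
Qed.

Lemma window (t s x B : R) n (W G : set R) : 0 < t -> W `<=` G ->
  (forall k : nat, W (k%:R / s) -> x ^+ k <= expR B) ->
  expR (- B) * Sw t s x n W <= law_scaledK t s n G.
Proof.
move=> t0 WG hx; rewrite /Sw /law_scaledK mulr_sumr !big_nat; apply: ler_sum => k _.
have p0 := probK_ge0 t n k t0.
case: (pselect (W (k%:R / s))) => h.
  rewrite ind1 // ind1 ?mulr1; last exact: WG.
  rewrite mulrCA -[X in _ <= X]mulr1; apply: ler_wpM2l => //.
  rewrite expRN ler_pdivrMl ?expR_gt0 // mulr1; exact: hx.
rewrite ind0 // mulr0 mulr0.
apply: mulr_ge0 => //; by case/andP: (ind01 G (k%:R / s)).
Qed.

Lemma xk_bound (s x d : R) (k : nat) : 0 < s -> 0 < x ->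
  x - d < k%:R / s < x + d ->
  x ^+ k <= expR (s * x * ln x + s * d * `|ln x|).
Proof.
move=> s0 x0 /andP[h1 h2].
rewrite -[X in X ^+ _]lnK ?posrE // -expRM_natl ler_expR.
have e : k%:R = s * (k%:R / s) by field; rewrite gt_eqF.
rewrite e.
set u := k%:R / s.
have hu : (u - x) * ln x <= d * `|ln x|.
  apply: le_trans (ler_norm _) _; rewrite normrM ler_wpM2r //.
  rewrite ler_norml /u; apply/andP; split; lra.
have : s * ((u - x) * ln x) <= s * (d * `|ln x|) by apply: ler_wpM2l => //; apply: ltW.
move=> h; have e2 : s * u * ln x = s * x * ln x + s * ((u - x) * ln x) by ring.
rewrite e2; have e3 : s * d * `|ln x| = s * (d * `|ln x|) by ring.
rewrite e3; lra.
Qed.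

End Win.
Arguments Sw {R}. Arguments decomp {R}. Arguments window {R}. Arguments xk_bound {R}.


Section Low.
Variable R : realType.

Lemma expR2_ge4 : 4 <= expR (2 : R).
Proof.
have h := @expR_ge1Dx R 1.
have -> : (2 : R) = 1 + 1 by [].
rewrite expRD; have -> : (4 : R) = 2 * 2 by rewrite -natrM.
by apply: ler_pM => //; lra.
Qed.

Lemma expR1_ge2 : 2 <= expR (1 : R).
Proof. by have h := @expR_ge1Dx R 1; lra. Qed.

Lemma lnw_bounds (w : R) : 1 <= w -> (w - 1) / w <= ln w <= w - 1.
Proof.
move=> w1; have w0 : 0 < w by lra.
apply/andP; split.
  have := @le_ln1Dx R (w^-1 - 1).
  rewrite addrCA subrr addr0 lnV ?posrE // => h.
  have hw : 0 < w^-1 by rewrite invr_gt0.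
  have h2 : - ln w <= w^-1 - 1 by apply: h; lra.
  have -> : (w - 1) / w = 1 - w^-1 by field; rewrite gt_eqF.
  lra.
have := @le_ln1Dx R (w - 1); rewrite addrCA subrr addr0; apply; lra.
Qed.


Lemma lower_fixed (t x d eps : R) n (G : set R) :
  (0 < n)%N -> 1 <= t -> t <= n%:R -> 0 < ln (n%:R / t) ->
  0 < x -> 0 < d -> d <= x ->
  [set u | x - d < u < x + d] `<=` G ->
  d * `|ln x| <= eps / 2 ->
  let q := d / (2 * x) in
  let c1 := q * d / (2 * (1 + q)) in
  let Dx := `|ln x| + 2 / x in
  let E := 2 * `|x * (1 + q) - 1| + 2 * `|x / (1 + q) - 1| + `|x - 1| * Dx in
  E + 2 <= c1 * ln (n%:R / t) ->
  `|x - 1| * Dx + 1 <= ln (n%:R / t) * (eps / 2) ->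
  expR (- (t * ln (n%:R / t) * (rateI x + eps))) <= law_scaledK t (t * ln (n%:R / t)) n G.
Proof.
move=> n0 t1 tn L0 x0 d0 dx WG hd q c1 Dx E hE hL.
set L := ln (n%:R / t) in L0 hE hL *.
have t0 : 0 < t by lra.
have s0 : 0 < t * L by apply: mulr_gt0.
have q0 : 0 < q by rewrite /q; apply: divr_gt0 => //; apply: mulr_gt0.
set w := 1 + q.
have w1 : 1 <= w by rewrite /w; lra.
have w0 : 0 < w by lra.
set lam := ln w.
have /andP[lam1 lam2] := lnw_bounds w w1.
have lam0 : 0 <= lam by apply: ln_ge0.
have ew : expR lam = w by rewrite lnK // posrE.
have ewN : expR (- lam) = w^-1 by rewrite expRN ew.
set W := [set u | x - d < u < x + d].
set U := [set u | x + d <= u].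
set Dn := [set u | u <= x - d].
set T := rising (t * x) n / rising t n.
set H1 := Hs t n.
set Hx := Hs (t * x) n.
have hdec : T <= Sw t (t * L) x n W + Sw t (t * L) x n U + Sw t (t * L) x n Dn.
  apply: decomp => // u; rewrite /W /U /Dn /=.
  case: (lerP (x + d) u) => h1; first by right; left.
  case: (lerP u (x - d)) => h2; first by right; right.
  by left; apply/andP; split.
have hU : Sw t (t * L) x n U <= expR (- (lam * ((x + d) * (t * L)))) * expR (t * (x * w - 1) * H1).
  apply: le_trans (chernoff_bd t (t * L) (x + d) lam x n U n0 t0 x0 _) _.
    move=> k k0 h; rewrite /U /= in h.
    have : (x + d) * (t * L) <= k%:R by rewrite -ler_pdivlMr.
    by move=> h2; apply: ler_wpM2l.
  rewrite ew; apply: ler_wpM2l; first exact: ltW (expR_gt0 _).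
  by apply: ratio_ub' => //; apply: mulr_gt0.
have hD : Sw t (t * L) x n Dn <= expR (- ((- lam) * ((x - d) * (t * L)))) * expR (t * (x / w - 1) * H1).
  apply: le_trans (chernoff_bd t (t * L) (x - d) (- lam) x n Dn n0 t0 x0 _) _.
    move=> k k0 h; rewrite /Dn /= in h.
    have : k%:R <= (x - d) * (t * L) by rewrite -ler_pdivrMr.
    by move=> h2; rewrite !mulNr lerN2; apply: ler_wpM2l.
  rewrite ewN; apply: ler_wpM2l; first exact: ltW (expR_gt0 _).
  by apply: ratio_ub' => //; apply: divr_gt0.
have hT : expR (t * (x - 1) * Hx) <= T by apply: ratio_lb'.
have [a1] := (Hs_lin t 1 (t * (x * w - 1)) n t1 tn ltr01, Hs_lin t 1 (t * (x / w - 1)) n t1 tn ltr01).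
move=> a2.
rewrite mulr1 ln1 normr0 add0r divr1 -/H1 -/L in a1 a2.
have a3 := Hs_lin t x (- (t * (x - 1))) n t1 tn x0.
rewrite -/Hx -/L -/Dx in a3.
have nt := fun y => normrM t y.
rewrite (gtr0_norm t0) in nt.
rewrite nt in a1; rewrite nt in a2; rewrite normrN nt in a3.
have id1 : t * (x * w - 1) * L - t * (x - 1) * L - (w - 1) / w * ((x + d) * (t * L)) = - (c1 * L * t).
  rewrite /c1 /w /q; field; rewrite !gt_eqF //; lra.
have id2 : (w - 1) * ((x - d) * (t * L)) + t * (x / w - 1) * L - t * (x - 1) * L
    = - (c1 * L * t) - (q * q * d / (1 + q)) * L * t.
  rewrite /c1 /w /q; field; rewrite !gt_eqF //; lra.
have hq2 : 0 <= (q * q * d / (1 + q)) * L * t.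
  apply: mulr_ge0; last lra; apply: mulr_ge0; last lra.
  apply: divr_ge0; last lra; apply: mulr_ge0; last lra; apply: mulr_ge0; lra.
have nE : 0 <= `|x - 1| * Dx by apply: mulr_ge0; rewrite // /Dx; apply: addr_ge0 => //; apply: divr_ge0; lra.
have tE : c1 * L * t - t * E >= c1 * L - E.
  have : 0 <= (t - 1) * (c1 * L - E) by apply: mulr_ge0; lra.
  move=> h; have e : (t - 1) * (c1 * L - E) = (c1 * L * t - t * E) - (c1 * L - E) by ring.
  lra.
have Edef : t * E = 2 * (t * `|x * w - 1|) + 2 * (t * `|x / w - 1|) + t * `|x - 1| * Dx.
  by rewrite /E /w; ring.
have k1 : (w - 1) / w * ((x + d) * (t * L)) <= lam * ((x + d) * (t * L)).
  apply: ler_wpM2r => //; apply: mulr_ge0; lra.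
have k2 : lam * ((x - d) * (t * L)) <= (w - 1) * ((x - d) * (t * L)).
  apply: ler_wpM2r => //; apply: mulr_ge0; lra.
have eU : - (lam * ((x + d) * (t * L))) + t * (x * w - 1) * H1 <= -2 + t * (x - 1) * Hx.
  have e3 : - (t * (x - 1)) * Hx = - (t * (x - 1) * Hx) by ring.
  have e4 : - (t * (x - 1)) * L = - (t * (x - 1) * L) by ring.
  rewrite e3 e4 in a3.
  have : 0 <= t * `|x / w - 1| by apply: mulr_ge0 => //; lra.
  lra.
have eD : - ((- lam) * ((x - d) * (t * L))) + t * (x / w - 1) * H1 <= -2 + t * (x - 1) * Hx.
  have e3 : - (t * (x - 1)) * Hx = - (t * (x - 1) * Hx) by ring.
  have e4 : - (t * (x - 1)) * L = - (t * (x - 1) * L) by ring.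
  rewrite e3 e4 in a3.
  have e5 : - ((- lam) * ((x - d) * (t * L))) = lam * ((x - d) * (t * L)) by ring.
  rewrite e5.
  have : 0 <= t * `|x * w - 1| by apply: mulr_ge0 => //; lra.
  lra.
have e2 := expR2_ge4.
have T0 : 0 <= T by apply: le_trans hT; apply: ltW (expR_gt0 _).
have hU' : Sw t (t * L) x n U <= T / 4.
  apply: le_trans hU _; rewrite -expRD.
  apply: le_trans (_ : expR (-2 + t * (x - 1) * Hx) <= _); first by rewrite ler_expR.
  rewrite expRD expRN; apply: le_trans (_ : (expR 2)^-1 * T <= _).
    by apply: ler_wpM2l => //; rewrite invr_ge0; apply: ltW (expR_gt0 _).
  rewrite mulrC ler_wpM2l // lef_pV2 ?posrE //; lra.
have hD' : Sw t (t * L) x n Dn <= T / 4.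
  apply: le_trans hD _; rewrite -expRD.
  apply: le_trans (_ : expR (-2 + t * (x - 1) * Hx) <= _); first by rewrite ler_expR.
  rewrite expRD expRN; apply: le_trans (_ : (expR 2)^-1 * T <= _).
    by apply: ler_wpM2l => //; rewrite invr_ge0; apply: ltW (expR_gt0 _).
  rewrite mulrC ler_wpM2l // lef_pV2 ?posrE //; lra.
have hW : T / 2 <= Sw t (t * L) x n W by lra.
set B := t * L * x * ln x + t * L * d * `|ln x|.
have hwin : expR (- B) * Sw t (t * L) x n W <= law_scaledK t (t * L) n G.
  apply: window => // k hk; exact: xk_bound.
apply: le_trans hwin.
apply: le_trans (_ : expR (- B) * (T / 2) <= _); last first.
  by apply: ler_wpM2l => //; apply: ltW (expR_gt0 _).
have e1 := expR1_ge2.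
have h12 : expR (-1) <= 2^-1 :> R by rewrite expRN lef_pV2 ?posrE //; lra.
apply: le_trans (_ : expR (- B) * (expR (-1) * expR (t * (x - 1) * Hx)) <= _); last first.
  apply: ler_wpM2l; first exact: ltW (expR_gt0 _).
  rewrite mulrC; apply: ler_pM => //; try exact: ltW (expR_gt0 _).
rewrite -!expRD ler_expR /rateI gt_eqF //=.
have e3 : - (t * (x - 1)) * Hx = - (t * (x - 1) * Hx) by ring.
have e4 : - (t * (x - 1)) * L = - (t * (x - 1) * L) by ring.
rewrite e3 e4 in a3.
have f1 : t * L * d * `|ln x| <= t * L * (eps / 2).
  rewrite -mulrA; apply: ler_wpM2l => //; lra.
have f2 : t * `|x - 1| * Dx + 1 <= t * L * (eps / 2).
  have : t * (`|x - 1| * Dx + 1) <= t * (L * (eps / 2)) by apply: ler_wpM2l; lra.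
  have : 1 <= t * 1 by lra.
  move=> h3 h4; have e6 : t * (`|x - 1| * Dx + 1) = t * `|x - 1| * Dx + t * 1 by ring.
  have e7 : t * (L * (eps / 2)) = t * L * (eps / 2) by ring.
  lra.
have e8 : - (t * L * (x * ln x - x + 1 + eps)) = - (t * L * x * ln x) + t * (x - 1) * L - t * L * (eps / 2) - t * L * (eps / 2) by field.
rewrite e8 /B; lra.
Qed.

End Low.


Section Rate.
Variable R : realType.

Lemma ln_ge1V (x : R) : 0 < x -> 1 - x^-1 <= ln x.
Proof.
move=> x0; have hx : 0 < x^-1 by rewrite invr_gt0.
have := @le_ln1Dx R (x^-1 - 1); rewrite addrCA subrr addr0 lnV ?posrE // => h.
have := h ltac:(lra); lra.
Qed.

Lemma rateI_pos (x : R) : 0 < x -> rateI x = x * ln x - x + 1.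
Proof. by move=> x0; rewrite /rateI gt_eqF. Qed.

Lemma rateI_ge0 (x : R) : 0 <= x -> 0 <= rateI x.
Proof.
rewrite le_eqVlt => /orP[/eqP <-|x0]; first by rewrite /rateI eqxx; lra.
rewrite rateI_pos //.
have := ler_wpM2l (ltW x0) (ln_ge1V x x0).
rewrite mulrBr mulr1 mulfV ?gt_eqF //; lra.
Qed.

Lemma rateI1 : rateI (1 : R) = 0.
Proof. by rewrite rateI_pos // ln1 mulr0; lra. Qed.

Lemma rateI0 : rateI (0 : R) = 1.
Proof. by rewrite /rateI eqxx; lra. Qed.

Lemma rateI_near0 (y : R) : 0 < y -> 1 - y - 2 * Num.sqrt y <= rateI y.
Proof.
move=> y0; rewrite rateI_pos //.
set v := Num.sqrt y.
have v0 : 0 < v by rewrite /v sqrtr_gt0.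
have yv : y = v ^+ 2 by rewrite /v sqr_sqrtr // ltW.
have lv : - v^-1 <= ln v.
  have h := @ln_sublinear R v^-1 ltac:(by rewrite invr_gt0).
  rewrite lnV ?posrE // in h; lra.
have ly : ln y = 2 * ln v by rewrite yv lnXn // mulr2n; ring.
have : y * ln y >= - 2 * v.
  rewrite ly yv.
  have := ler_wpM2l (ltW (mulr_gt0 v0 v0)) lv.
  have e : v * v * - v^-1 = - v by field; rewrite gt_eqF.
  rewrite e => h; have e2 : v ^+ 2 * (2 * ln v) = 2 * (v * v * ln v) by ring.
  rewrite e2; lra.
lra.
Qed.

Lemma closed_sub (c : R) : closed [set x : R | 0 <= x /\ rateI x <= c].
Proof.
move=> x xcl.
have x0 : 0 <= x.
  have : closure [set x : R | 0 <= x] x.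
    by apply: closureS xcl => y [].
  by move/closed_ge.
split => //; rewrite leNgt; apply/negP => cx.
suff [r r0 hr] : exists2 r : R, 0 < r & forall y, 0 <= y -> `|x - y| < r -> c < rateI y.
  have [y [[y0 yc] yb]] := xcl (ball x r) (nbhsx_ballx x r r0).
  have := hr y y0 yb; rewrite /ball /= in yb; lra.
move: x0; rewrite le_eqVlt => /orP[/eqP x0|x0].
  rewrite -x0 rateI0 in cx *.
  set m := Num.min ((1 - c) / 4) 1.
  have m0 : 0 < m by rewrite /m lt_min; apply/andP; split; lra.
  have m1 : m <= 1 by rewrite /m ge_min; apply/orP; right.
  have m2 : m <= (1 - c) / 4 by rewrite /m ge_min; apply/orP; left.
  exists (m ^+ 2); first exact: exprn_gt0.
  move=> y; rewrite le_eqVlt => /orP[/eqP <-|y0]; first by rewrite rateI0.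
  rewrite sub0r normrN gtr0_norm // => ym.
  have hv : Num.sqrt y < m.
    rewrite -(ltr_sqrt) ?exprn_gt0 // in ym.
    by rewrite sqrtr_sqr gtr0_norm in ym.
  have := rateI_near0 y y0.
  have : y < m by apply: lt_le_trans ym _; rewrite expr2 -[X in _ <= X]mulr1 ler_wpM2l; lra.
  have := sqrtr_ge0 y.
  lra.
set f := fun y : R => y * ln y - y + 1.
have fc : f y @[y --> x] --> f x.
  apply: cvgD; last exact: cvg_cst.
  apply: cvgB; last exact: cvg_id.
  apply: cvgM; first exact: cvg_id.
  exact: continuous_ln.
have cx' : c < f x by rewrite /f -rateI_pos.
have [r r0 hr] : exists2 r : R, 0 < r & forall y, ball x r y -> c < f y /\ 0 < y.
  have hb : \forall y \near x, c < f y /\ 0 < y.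
    near=> y; split.
    - near: y; exact: (cvgr_gt (f x) fc c cx').
    - near: y; exact: (cvgr_gt x cvg_id 0 x0).
  by move/nbhs_ballP: hb => [r /= r0 hr]; exists r.
exists r => // y y0 hy.
have [a b] := hr y hy.
by rewrite rateI_pos.
Unshelve. all: by end_near.
Qed.

End Rate.


Section Asym.
Variable R : realType.

Lemma law_sub (t s : R) n (A B C : set R) : 0 < t -> 0 < s ->
  (forall u, 0 < u -> A u -> B u \/ C u) ->
  law_scaledK t s n A <= law_scaledK t s n B + law_scaledK t s n C.
Proof.
move=> t0 s0 h; rewrite /law_scaledK -big_split !big_nat; apply: ler_sum => k /andP[k1 _].
have p0 := probK_ge0 t n k t0.
rewrite /= -mulrDr; apply: ler_wpM2l => //.
have u0 : 0 < k%:R / s by apply: divr_gt0 => //; rewrite ltr0n.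
have := ind01 B (k%:R / s); have := ind01 C (k%:R / s).
move=> /andP[c0 _] /andP[b0 _].
case: (pselect (A (k%:R / s))) => hA.
  by case: (h _ u0 hA) => hh; [rewrite (ind1 B)|rewrite (ind1 C)] => //; rewrite (ind1 A) //; lra.
rewrite ind0 //; lra.
Qed.

Lemma law_zero (t s : R) n (A : set R) : 0 < s ->
  (forall u, 0 < u -> ~ A u) -> law_scaledK t s n A = 0.
Proof.
move=> s0 h; rewrite /law_scaledK big_nat big1 // => k /andP[k1 _].
by rewrite ind0 ?mulr0 //; apply: h; apply: divr_gt0 => //; rewrite ltr0n.
Qed.

Lemma closed_sup_in (A : set R) : closed A -> A !=set0 -> has_ubound A -> A (sup A).
Proof. by move=> cA A0 ub; apply: cA; apply: closure_sup. Qed.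

End Asym.
Arguments law_sub {R}. Arguments law_zero {R}. Arguments closed_sup_in {R}.


Section Ev.
Variable R : realType.

Lemma ev (n : R -> nat) (n_pos : forall theta : R, (0 < n theta)%N)
    (ratio0 : (fun theta : R => theta / (n theta)%:R) @ +oo%R --> (0 : R)) (K : R) :
  \forall t \near +oo%R, 1 <= t /\ t <= (n t)%:R /\ K <= ln ((n t)%:R / t).
Proof.
have e0 : 0 < expR (- `|K|) :> R by apply: expR_gt0.
have e1 : expR (- `|K|) <= 1 :> R by rewrite expR_le1 oppr_le0.
near=> t.
have t1 : 1 <= t by near: t; apply: nbhs_pinfty_ge; exact: num_real.
have ht : `|t / (n t)%:R| < expR (- `|K|) by near: t; exact: cvgr0_norm_lt.
have n0 : 0 < (n t)%:R :> R by rewrite ltr0n.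
have t0 : 0 < t by lra.
have q0 : 0 < t / (n t)%:R by apply: divr_gt0.
rewrite gtr0_norm // in ht.
split => //; split.
  have : t / (n t)%:R <= 1 by lra.
  by rewrite ler_pdivrMr // mul1r.
have e : (n t)%:R / t = (t / (n t)%:R)^-1 by rewrite invf_div.
rewrite e lnV ?posrE //.
have : ln (t / (n t)%:R) < - `|K|.
  by rewrite -ltr_expR lnK ?posrE.
have := ler_norm K; lra.
Unshelve. all: by end_near.
Qed.

End Ev.
Arguments ev {R n}.


Section Up.
Variable R : realType.
Variable n : R -> nat.
Hypothesis n_pos : forall theta : R, (0 < n theta)%N.
Hypothesis ratio0 : (fun theta : R => theta / (n theta)%:R) @ +oo%R --> (0 : R).

Let L t := ln ((n t)%:R / t).

Lemma low_part (F : set R) (cF : closed F) (M : R) :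
  0 < M -> (forall x, F x -> 0 <= x -> M <= rateI x) ->
  \forall t \near +oo%R, law_scaledK t (t * L t) (n t) (F `&` ([set u | 0 <= u] `&` [set u | u <= 1]))
     <= expR (- (t * L t * M)).
Proof.
move=> M0 hM.
set Fl := F `&` ([set u | 0 <= u] `&` [set u | u <= 1]).
have cFl : closed Fl by apply: closedI => //; apply: closedI; [exact: closed_ge|exact: closed_le].
have hpos : \forall t \near +oo%R, 0 < t * L t.
  apply: filterS (ev n_pos ratio0 1) => t [t1 [tn L1]].
  by apply: mulr_gt0; rewrite /L; lra.
case: (pselect (Fl !=set0)) => Fl0; last first.
  apply: filterS hpos => t s0; rewrite (law_zero _ _ _ _ s0); first exact: ltW (expR_gt0 _).
  by move=> u u0 Fu; apply: Fl0; exists u.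
have ub : has_ubound Fl by exists 1 => u [_ [_ /= ?]].
have Fy := closed_sup_in Fl cFl Fl0 ub.
set y0 := sup Fl in Fy.
have uy : forall u, Fl u -> u <= y0 by move=> u Fu; exact: sup_upper_bound.
case: Fy => [Fy0 [/= y00 y01]].
have Iy := hM y0 Fy0 y00.
have y1 : y0 < 1.
  rewrite lt_neqAle y01 andbT; apply/negP => /eqP e.
  by move: Iy; rewrite e rateI1; lra.
move: y00; rewrite le_eqVlt => /orP[/eqP e|y0p].
  apply: filterS hpos => t s0; rewrite (law_zero _ _ _ _ s0); first exact: ltW (expR_gt0 _).
  by move=> u u0 Fu; have := uy u Fu; rewrite -e; lra.
apply: filterS (ev n_pos ratio0 1) => t [t1 [tn L1]].
have L0 : 0 < L t by rewrite /L; lra.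
apply: le_trans (lower_tail t y0 (n t) Fl (n_pos t) t1 tn L0 _ uy) _.
  by rewrite y0p y1.
rewrite ler_expR lerN2; apply: ler_wpM2l => //.
by apply: mulr_ge0; lra.
Qed.

Lemma up_part (F : set R) (cF : closed F) (M eps : R) :
  0 < M -> 0 < eps -> (forall x, F x -> 0 <= x -> M <= rateI x) ->
  \forall t \near +oo%R, law_scaledK t (t * L t) (n t) (F `&` [set u | 1 <= u])
     <= expR (- (t * L t * M) + t * L t * (eps / 2)).
Proof.
move=> M0 e0 hM.
set Fu := F `&` [set u | 1 <= u].
have cFu : closed Fu by apply: closedI => //; exact: closed_ge.
have hpos : \forall t \near +oo%R, 0 < t * L t.
  apply: filterS (ev n_pos ratio0 1) => t [t1 [tn L1]].
  by apply: mulr_gt0; rewrite /L; lra.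
case: (pselect (Fu !=set0)) => Fu0; last first.
  apply: filterS hpos => t s0; rewrite (law_zero _ _ _ _ s0); first exact: ltW (expR_gt0 _).
  by move=> u u0 Fu'; apply: Fu0; exists u.
set Nu := [set - x | x in Fu].
have cNu : closed Nu by apply: closedN.
have Nu0 : Nu !=set0 by case: Fu0 => u Fuu; exists (- u); exists u.
have ub : has_ubound Nu by exists (-1) => _ [u [_ /= u1] <-]; lra.
have [y1 Fy1 ey] := closed_sup_in Nu cNu Nu0 ub.
have uy : forall u, Fu u -> y1 <= u.
  move=> u Fuu; have : - u <= sup Nu by apply: sup_upper_bound => //; exists u.
  rewrite -ey; lra.
case: Fy1 => [Fy1 /= y11].
have Iy := hM y1 Fy1 ltac:(lra).
have y1g : 1 < y1.
  rewrite lt_neqAle y11 andbT; apply/negP => /eqP e.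
  by move: Iy; rewrite -e rateI1; lra.
apply: filterS (ev n_pos ratio0 (4 * (y1 - 1) / eps + 1)) => t [t1 [tn LK]].
have L0 : 0 < L t.
  have : 0 <= 4 * (y1 - 1) / eps by apply: divr_ge0; lra.
  rewrite /L; lra.
apply: le_trans (upper_tail t y1 (n t) Fu (n_pos t) t1 tn L0 y1g uy) _.
rewrite ler_expR.
have s0 : 0 <= t * L t by apply: mulr_ge0; lra.
have h1 : t * L t * M <= t * L t * rateI y1 by apply: ler_wpM2l.
have h2 : 4 * (y1 - 1) <= L t * eps.
  have : 4 * (y1 - 1) / eps <= L t by rewrite /L; lra.
  by rewrite ler_pdivrMr // => h; lra.
have h3 : 2 * t * (y1 - 1) <= t * L t * (eps / 2).
  have : t * (4 * (y1 - 1)) <= t * (L t * eps) by apply: ler_wpM2l => //; lra.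
  move=> h; have e1 : t * L t * (eps / 2) = (t * (L t * eps)) / 2 by ring.
  have e2 : 2 * t * (y1 - 1) = (t * (4 * (y1 - 1))) / 2 by field.
  rewrite e1 e2; lra.
rewrite /L in h1 h3 *; lra.
Qed.

End Up.
Arguments low_part {R n}. Arguments up_part {R n}.


Section Fin.
Variable R : realType.
Variable n : R -> nat.
Hypothesis n_pos : forall theta : R, (0 < n theta)%N.
Hypothesis ratio0 : (fun theta : R => theta / (n theta)%:R) @ +oo%R --> (0 : R).

Lemma upper_bound (F : set R) : closed F ->
  forall M : R, (forall x, F x -> 0 <= x -> M <= rateI x) ->
  forall eps : R, 0 < eps ->
  \forall t \near +oo%R, law_scaledK t (t * ln ((n t)%:R / t)) (n t) F
     <= expR (t * ln ((n t)%:R / t) * (eps - M)).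
Proof.
move=> cF M hM eps e0.
case: (leP M 0) => M0.
  apply: filterS (ev n_pos ratio0 1) => t [t1 [tn L1]].
  have t0 : 0 < t by lra.
  apply: le_trans (law_le1 _ _ _ _ (n_pos t) t0) _.
  have h : 0 <= t * ln ((n t)%:R / t) * (eps - M).
    apply: mulr_ge0; [apply: mulr_ge0|]; lra.
  have := expR_ge1Dx (t * ln ((n t)%:R / t) * (eps - M)); lra.
have hl := low_part n_pos ratio0 F cF M M0 hM.
have hu := up_part n_pos ratio0 F cF M eps M0 e0 hM.
near=> t.
have [t1 [tn LK]] : 1 <= t /\ t <= (n t)%:R /\ 2 / eps + 1 <= ln ((n t)%:R / t).
  by near: t; exact: ev.
have hl' : law_scaledK t (t * ln ((n t)%:R / t)) (n t) (F `&` ([set u | 0 <= u] `&` [set u | u <= 1]))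
     <= expR (- (t * ln ((n t)%:R / t) * M)) by near: t; exact: hl.
have hu' : law_scaledK t (t * ln ((n t)%:R / t)) (n t) (F `&` [set u | 1 <= u])
     <= expR (- (t * ln ((n t)%:R / t) * M) + t * ln ((n t)%:R / t) * (eps / 2)) by near: t; exact: hu.
set L := ln ((n t)%:R / t) in LK hl' hu' *.
have t0 : 0 < t by lra.
have ge : 0 <= 2 / eps by apply: divr_ge0; lra.
have L0 : 0 < L by lra.
have s0 : 0 < t * L by apply: mulr_gt0.
apply: le_trans (law_sub _ _ _ _ (F `&` ([set u | 0 <= u] `&` [set u | u <= 1])) (F `&` [set u | 1 <= u]) t0 s0 _) _.
  move=> u u0 Fu; case: (lerP u 1) => h; [left|right]; split => //.
  by split => //; apply: ltW.
  by apply: ltW.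
set B := - (t * L * M) + t * L * (eps / 2).
have h1 : expR (- (t * L * M)) <= expR B.
  rewrite ler_expR /B lerDl; apply: mulr_ge0; lra.
have h2 : 2 <= expR (t * L * (eps / 2)).
  apply: le_trans (@expR1_ge2 R) _; rewrite ler_expR.
  have : 2 / eps * eps <= L * eps by apply: ler_wpM2r; lra.
  rewrite mulfVK ?gt_eqF // => h.
  have : L * eps <= t * (L * eps) by rewrite -[X in X <= _]mul1r; apply: ler_wpM2r; lra.
  move=> h'; have e : t * L * (eps / 2) = (t * (L * eps)) / 2 by field.
  rewrite e; lra.
have e : t * L * (eps - M) = t * L * (eps / 2) + B by rewrite /B; field.
rewrite e expRD.
have hB := expR_gt0 B.
have : 2 * expR B <= expR (t * L * (eps / 2)) * expR B by apply: ler_wpM2r; lra.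
lra.
Unshelve. all: by end_near.
Qed.

End Fin.
Arguments upper_bound {R n}.


Section Fin2.
Variable R : realType.
Variable n : R -> nat.
Hypothesis n_pos : forall theta : R, (0 < n theta)%N.
Hypothesis ratio0 : (fun theta : R => theta / (n theta)%:R) @ +oo%R --> (0 : R).

Lemma lower_pos (G : set R) (x eps r : R) : 0 < x -> 0 < eps -> 0 < r ->
  (forall y, `|x - y| < r -> G y) ->
  \forall t \near +oo%R, expR (- (t * ln ((n t)%:R / t) * (rateI x + eps)))
     <= law_scaledK t (t * ln ((n t)%:R / t)) (n t) G.
Proof.
move=> x0 e0 r0 hG.
set d1 := eps / (2 * (`|ln x| + 1)).
have d10 : 0 < d1 by rewrite /d1; apply: divr_gt0 => //; apply: mulr_gt0 => //; apply: ltr_pwDr.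
set d := Num.min r (Num.min x d1).
have d0 : 0 < d by rewrite /d !lt_min r0 x0 d10.
have dr : d <= r by rewrite /d ge_min lexx.
have dx : d <= x by rewrite /d !ge_min lexx orbT.
have dd1 : d <= d1 by rewrite /d !ge_min lexx !orbT.
have hd : d * `|ln x| <= eps / 2.
  have : d * (`|ln x| + 1) <= d1 * (`|ln x| + 1) by apply: ler_wpM2r => //; apply: addr_ge0.
  have lp : 0 < `|ln x| + 1 by apply: ltr_pwDr.
  have e : d1 * (`|ln x| + 1) = eps / 2 by rewrite /d1; field; rewrite gt_eqF.
  rewrite e mulrDr mulr1 => h; have := ltW d0; lra.
have WG : [set u | x - d < u < x + d] `<=` G.
  move=> u /= /andP[h1 h2]; apply: hG; rewrite ltr_norml; apply/andP; split; lra.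
pose q := d / (2 * x).
pose c1 := q * d / (2 * (1 + q)).
pose Dx := `|ln x| + 2 / x.
pose E := 2 * `|x * (1 + q) - 1| + 2 * `|x / (1 + q) - 1| + `|x - 1| * Dx.
have q0 : 0 < q by rewrite /q; apply: divr_gt0 => //; apply: mulr_gt0.
have c10 : 0 < c1 by rewrite /c1; apply: divr_gt0; [apply: mulr_gt0|apply: mulr_gt0; lra].
have Dx0 : 0 <= Dx by rewrite /Dx; apply: addr_ge0 => //; apply: divr_ge0; lra.
have E0 : 0 <= E.
  rewrite /E; apply: addr_ge0; [apply: addr_ge0|]; apply: mulr_ge0 => //.
set K1 := (E + 2) / c1.
set K2 := 2 * (`|x - 1| * Dx + 1) / eps.
have K10 : 0 <= K1 by rewrite /K1; apply: divr_ge0; lra.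
have K20 : 0 <= K2.
  rewrite /K2; apply: divr_ge0; last lra.
  apply: mulr_ge0 => //; apply: addr_ge0 => //; apply: mulr_ge0 => //.
apply: filterS (ev n_pos ratio0 (K1 + K2 + 1)) => t [t1 [tn LK]].
have L0 : 0 < ln ((n t)%:R / t) by lra.
have hE : E + 2 <= c1 * ln ((n t)%:R / t).
  have : K1 <= ln ((n t)%:R / t) by lra.
  by rewrite /K1 ler_pdivrMr // mulrC.
have hL : `|x - 1| * Dx + 1 <= ln ((n t)%:R / t) * (eps / 2).
  have : K2 <= ln ((n t)%:R / t) by lra.
  rewrite /K2 ler_pdivrMr // => h.
  have e : ln ((n t)%:R / t) * (eps / 2) = (ln ((n t)%:R / t) * eps) / 2 by field.
  rewrite e; lra.
exact: (@lower_fixed R t x d eps (n t) G (n_pos t) t1 tn L0 x0 d0 dx WG hd hE hL).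
Qed.

End Fin2.


Theorem theorem4p5 (R : realType) (n : R -> nat)
    (n_pos : forall theta : R, (0 < n theta)%N)
    (n_infty : (fun theta : R => (n theta)%:R : R) @ +oo%R --> +oo%R)
    (ratio0 : (fun theta : R => theta / (n theta)%:R) @ +oo%R --> (0 : R)) :
  LDP_on_nonneg
    (fun theta : R => law_scaledK theta (theta * ln ((n theta)%:R / theta)) (n theta))
    (fun theta : R => theta * ln ((n theta)%:R / theta))
    (@rateI R).
Proof.
split.
- exact: rateI_ge0.
- exact: closed_sub.
- exact: (upper_bound n_pos ratio0).
move=> G oG x Gx x0 eps e0.
have : nbhs x G by exact: oG.
move/nbhs_ballP => [r /= r0 hr].
have hG : forall y, `|x - y| < r -> G y by move=> y hy; apply: hr.
move: x0; rewrite le_eqVlt => /orP[/eqP x0|x0]; last first.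
  exact: (@lower_pos R n n_pos ratio0 G x eps r x0 e0 r0 hG).
subst x.
set x' := Num.min (r / 2) (2^-1).
have x'0 : 0 < x' by rewrite /x' lt_min; apply/andP; split; [apply: divr_gt0|]; lra.
have x'r : x' <= r / 2 by rewrite /x' ge_min lexx.
have x'1 : x' <= 2^-1 by rewrite /x' ge_min lexx orbT.
have hG' : forall y, `|x' - y| < r / 2 -> G y.
  move=> y hy; apply: hG; rewrite sub0r normrN.
  have := ler_normD (y - x') x'; rewrite subrK (gtr0_norm x'0); rewrite distrC in hy; lra.
have r20 : 0 < r / 2 by apply: divr_gt0; lra.
have hl := @lower_pos R n n_pos ratio0 G x' eps (r / 2) x'0 e0 r20 hG'.
have hI : rateI x' <= rateI 0.
  rewrite rateI0 rateI_pos //.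
  have : ln x' <= 0 by apply: ln_le0; lra.
  move=> h; have : x' * ln x' <= 0 by apply: mulr_ge0_le0 => //; apply: ltW.
  lra.
apply: filterS2 (ev n_pos ratio0 1) hl => t [t1 [tn L1]] h.
apply: le_trans h; rewrite ler_expR lerN2; apply: ler_wpM2l.
  by apply: mulr_ge0; lra.
lra.
Qed.
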